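(* In the setting of the theorem on differential equations for the conserved quantities (with $\widetilde H_0$, $\widetilde K_0$ as defined there and $g$ associated to $f$ via $B$), the functions $\widetilde H_0(\cdot,\varepsilon)$ and $\widetilde K_0(\cdot,\varepsilon)$ are in involution with respect to both brackets $\{F,G\}_J=(\nabla F)^TJ(x)\nabla G$ and $\{F,G\}_\Pi=(\nabla F)^T\Pi(x)\nabla G$, where $\Pi(x)=J(x)-\varepsilon^2J(x)\mathcal HJ(x)\mathcal HJ(x)$: that is, $\{\widetilde H_0,\widetilde K_0\}_J=0$ and $\{\widetilde H_0,\widetilde K_0\}_\Pi=0$.
   Context: Fix an integer $n\ge 2$. Points of $\mathbb R^{2n}$ are $x=(x_1,\dots,x_{2n})^{T}$; write $u=(x_1,\dots,x_n)^T$. Let $X(u)$ be the $n\times n$ matrix with entries $X(u)_{ij}=x_{k}$ where $k\in\{1,\dots,n\}$, $k\equiv i+j-1 \pmod n$, and let $J(x)=\begin{pmatrix}0&X(u)\\-X(u)&0\end{pmatrix}$. Let $\mathcal P$ be the $n\times n$ cyclic shift matrix ($\mathcal P_{i,i+1}=1$ for $1\le i\le n-1$, $\mathcal P_{n,1}=1$, all other entries $0$) and $A=\begin{pmatrix}\mathcal P&0\\0&\mathcal P\end{pmatrix}$. An admissible Hamiltonian is a homogeneous quadratic form $H(x)=\tfrac12 x^T\mathcal H x$ with a constant symmetric matrix $\mathcal H=\nabla^2H$ satisfying $A\mathcal H=\mathcal H A^T$; its Hamiltonian vector field is $f(x)=J(x)\nabla H(x)$. Associated vector fields: let $B=\sum_{i=0}^{n-1}\alpha_iA^i$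 with $\alpha_i\in\mathbb C$ and $B^2=I$; for an admissible $H_0$ with vector field $f$, put $K_0(x)=\tfrac12 x^T B\mathcal H x$ and $g=J\nabla K_0=B^Tf$. With $\mathcal K=B\mathcal H$, define $\widetilde H_0(x,\varepsilon)=x^T\mathcal H(I-\varepsilon^2(J(x)\mathcal H)^2)^{-1}x$ and $\widetilde K_0(x,\varepsilon)=x^T\mathcal K(I-\varepsilon^2(J(x)\mathcal K)^2)^{-1}x$. *)

(* Defs.v *)
(* Scalars: an arbitrary numClosedFieldType C (e.g. the complex
   numbers); "real" means [\is Num.real]. *)
From HB Require Import structures.
From mathcomp Require Import all_boot all_order all_algebra.
Set Implicit Arguments. Unset Strict Implicit. Unset Printing Implicit Defensive.
Import Order.TTheory GRing.Theory Num.Theory.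
Local Open Scope ring_scope.

Section Defs.
Variables (C : numClosedFieldType) (n : nat).

(* X(u)_{ij} = x_k, k = i+j-1 mod n (1-indexed)  <=>  0-indexed k = (i+j) mod n *)
Definition ord_addmod (i j : 'I_n) : 'I_n :=
  Ordinal (ltn_pmod (i + j) (leq_ltn_trans (leq0n i) (ltn_ord i))).

Definition Xmat (x : 'cV[C]_(n + n)) : 'M[C]_n :=
  \matrix_(i < n, j < n) x (lshift n (ord_addmod i j)) 0.

Definition Jmat (x : 'cV[C]_(n + n)) : 'M[C]_(n + n) :=
  block_mx 0 (Xmat x) (- Xmat x) 0.

Definition Pshift : 'M[C]_n := \matrix_(i < n, j < n) ((j : nat) == (i.+1 %% n)%N)%:R.

Definition Amat : 'M[C]_(n + n) := block_mx Pshift 0 0 Pshift.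

Definition mxpow (M : 'M[C]_(n + n)) (k : nat) : 'M[C]_(n + n) :=
  iter k (mulmx M) 1%:M.

Definition Bmat (alpha : nat -> C) : 'M[C]_(n + n) :=
  \sum_(i < n) alpha i *: mxpow Amat i.

Definition Htilde (M : 'M[C]_(n + n)) (eps : C) (x : 'cV[C]_(n + n)) : C :=
  (x^T *m M *m invmx (1%:M - eps ^+ 2 *: ((Jmat x *m M) *m (Jmat x *m M))) *m x) 0 0.

Definition resolvent_ok (M : 'M[C]_(n + n)) (eps : C) (x : 'cV[C]_(n + n)) : bool :=
  (1%:M - eps ^+ 2 *: ((Jmat x *m M) *m (Jmat x *m M))) \in unitmx.

Definition Pimat (M : 'M[C]_(n + n)) (eps : C) (x : 'cV[C]_(n + n)) : 'M[C]_(n + n) :=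
  Jmat x - eps ^+ 2 *: (Jmat x *m M *m Jmat x *m M *m Jmat x).

Definition is_partial (F : 'cV[C]_(n + n) -> C) (x : 'cV[C]_(n + n))
    (i : 'I_(n + n)) (l : C) : Prop :=
  forall e : C, 0 < e -> exists2 d : C, 0 < d &
    forall h : C, h \is Num.real -> h != 0 -> `|h| < d ->
      `|(F (x + h *: delta_mx i 0) - F x) / h - l| < e.

Definition is_gradient (F : 'cV[C]_(n + n) -> C) (x : 'cV[C]_(n + n))
    (g : 'cV[C]_(n + n)) : Prop :=
  forall i : 'I_(n + n), is_partial F x i (g i 0).

Definition bracket (gF : 'cV[C]_(n + n)) (M : 'M[C]_(n + n)) (gG : 'cV[C]_(n + n)) : C :=
  (gF^T *m M *m gG) 0 0.

End Defs.

(* Main.v *)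
Require Import Defs.
From HB Require Import structures.
From mathcomp Require Import all_boot all_order all_algebra.
From mathcomp Require Import ring.
Set Implicit Arguments. Unset Strict Implicit. Unset Printing Implicit Defensive.
Import Order.TTheory GRing.Theory Num.Theory.
Local Open Scope ring_scope.

Section Alg.
Variables (C : numClosedFieldType) (n : nat).

Lemma ordS_addl (a b : 'I_n) : ordS (ord_addmod a b) = ord_addmod (ordS a) b.
Proof. apply: val_inj => /=. by rewrite -addn1 modnDml modnDml addn1 addSn. Qed.

Lemma ordS_addr (a b : 'I_n) : ordS (ord_addmod a b) = ord_addmod a (ordS b).
Proof. apply: val_inj => /=. by rewrite -addn1 modnDml modnDmr addn1 addnS. Qed.

Lemma addmod_pred (i j : 'I_n) : ord_addmod i (ord_pred j) = ord_addmod (ord_pred i) j.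
Proof. apply: (@ordS_inj n). by rewrite ordS_addr ordS_addl !ord_predK. Qed.

Lemma addmod_pred2 (i j : 'I_n) : ord_addmod (ord_pred i) j = ord_pred (ord_addmod i j).
Proof. apply: (@ordS_inj n). by rewrite ordS_addl !ord_predK. Qed.

Lemma sum_shift (f : 'I_n -> C) (j : 'I_n) :
  \sum_(k < n) f k * ((j : nat) == (k.+1 %% n)%N)%:R = f (ord_pred j).
Proof.
rewrite (bigD1 (ord_pred j)) //=.
have -> : (j : nat) == ((ord_pred j).+1 %% n)%N.
  by have := ord_predK j; move/(congr1 val) => /= ->.
rewrite mulr1 big1 ?addr0 // => k hk.
case: eqP => [h|]; last by rewrite mulr0.
case/eqP: hk. have -> : j = ordS k by apply: val_inj.
by rewrite ordSK.
Qed.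

Lemma sum_shiftl (f : 'I_n -> C) (j : 'I_n) :
  \sum_(k < n) ((j : nat) == (k.+1 %% n)%N)%:R * f k = f (ord_pred j).
Proof. rewrite -sum_shift; apply: eq_bigr => k _; exact: mulrC. Qed.

Lemma XP (x : 'cV[C]_(n + n)) : Xmat x *m Pshift C n = (Pshift C n)^T *m Xmat x.
Proof.
apply/matrixP => i j; rewrite !mxE.
under eq_bigr => k _ do rewrite !mxE.
under [RHS]eq_bigr => k _ do rewrite !mxE.
by rewrite sum_shift sum_shiftl addmod_pred.
Qed.


Notation Jm := (@Jmat C n).
Notation P := (Pshift C n).
Notation A := (Amat C n).

Lemma JA (x : 'cV[C]_(n + n)) : Jm x *m A = A^T *m Jm x.
Proof.
rewrite /Jmat /Amat tr_block_mx !mulmx_block !trmx0.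
by rewrite !(mul0mx, mulmx0, add0r, addr0, mulNmx, mulmxN, XP).
Qed.

Lemma XmatD (u v : 'cV[C]_(n + n)) : Xmat (u + v) = Xmat u + Xmat v.
Proof. by apply/matrixP => i j; rewrite !mxE. Qed.
Lemma XmatZ a (u : 'cV[C]_(n + n)) : Xmat (a *: u) = a *: Xmat u.
Proof. by apply/matrixP => i j; rewrite !mxE. Qed.
Lemma Xmat0 : Xmat (0 : 'cV[C]_(n + n)) = 0.
Proof. by apply/matrixP => i j; rewrite !mxE. Qed.

Lemma JmD (u v : 'cV[C]_(n + n)) : Jm (u + v) = Jm u + Jm v.
Proof. by rewrite /Jmat XmatD add_block_mx !addr0 opprD. Qed.
Lemma JmZ a (u : 'cV[C]_(n + n)) : Jm (a *: u) = a *: Jm u.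
Proof. by rewrite /Jmat XmatZ scale_block_mx !scaler0 scalerN. Qed.
Lemma Jm0 : Jm 0 = 0.
Proof. by rewrite /Jmat Xmat0 oppr0 block_mx0. Qed.

Lemma Xmat_tr (u : 'cV[C]_(n + n)) : (Xmat u)^T = Xmat u.
Proof.
apply/matrixP => i j; rewrite !mxE; congr (u _ 0); congr lshift.
by apply: val_inj => /=; rewrite addnC.
Qed.

Lemma Jm_tr (u : 'cV[C]_(n + n)) : (Jm u)^T = - Jm u.
Proof.
by rewrite /Jmat tr_block_mx !trmx0 linearN /= Xmat_tr opp_block_mx !oppr0 opprK.
Qed.

Lemma XmatAT (w : 'cV[C]_(n + n)) : Xmat (A^T *m w) = P^T *m Xmat w.
Proof.
apply/matrixP => i j; rewrite !mxE big_split_ord /=.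
rewrite [X in _ + X]big1 ?addr0; last first.
  by move=> k _; rewrite /Amat tr_block_mx block_mxEur trmx0 mxE mul0r.
under eq_bigr => k _ do rewrite /Amat tr_block_mx block_mxEul !mxE.
under [RHS]eq_bigr => k _ do rewrite !mxE.
by rewrite sum_shiftl sum_shiftl addmod_pred2.
Qed.

Lemma ATJ (w : 'cV[C]_(n + n)) : A^T *m Jm w = Jm (A^T *m w).
Proof.
rewrite /Jmat XmatAT {1}/Amat tr_block_mx !mulmx_block !trmx0.
by rewrite !(mul0mx, mulmx0, add0r, addr0, mulNmx, mulmxN).
Qed.


Lemma mxpowS' (M : 'M[C]_(n + n)) k : mxpow M k.+1 = mxpow M k *m M.
Proof.
elim: k => [|k IH]; first by rewrite /mxpow /= mulmx1 mul1mx.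
have -> : mxpow M k.+2 = M *m mxpow M k.+1 by [].
by rewrite {1}IH mulmxA.
Qed.

Lemma JApow x k : Jm x *m mxpow A k = (mxpow A k)^T *m Jm x.
Proof.
elim: k => [|k IH]; first by rewrite /mxpow /= mulmx1 trmx1 mul1mx.
rewrite [mxpow A k.+1]/mxpow iterS -/(mxpow A k) mulmxA JA -mulmxA IH mulmxA.
by rewrite -trmx_mul -mxpowS' /mxpow iterS.
Qed.

Lemma ATJpow w k : (mxpow A k)^T *m Jm w = Jm ((mxpow A k)^T *m w).
Proof.
elim: k w => [|k IH] w; first by rewrite /mxpow /= trmx1 !mul1mx.
rewrite {1 2}/mxpow iterS -/(mxpow A k) trmx_mul -mulmxA ATJ IH.
by rewrite mulmxA.
Qed.

Lemma HApow (H : 'M[C]_(n + n)) k : A *m H = H *m A^T ->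
  mxpow A k *m H = H *m (mxpow A k)^T.
Proof.
move=> hA; elim: k => [|k IH]; first by rewrite /mxpow /= trmx1 mulmx1 mul1mx.
rewrite {1}/mxpow iterS -/(mxpow A k) -mulmxA IH mulmxA hA -mulmxA -trmx_mul.
by rewrite -mxpowS' /mxpow iterS.
Qed.

Lemma BtrE (alpha : nat -> C) :
  (Bmat n alpha)^T = \sum_(i < n) alpha i *: (mxpow A i)^T.
Proof. by rewrite /Bmat linear_sum; apply: eq_bigr => i _; rewrite linearZ. Qed.

Lemma JB alpha x : Jm x *m Bmat n alpha = (Bmat n alpha)^T *m Jm x.
Proof.
rewrite BtrE /Bmat mulmx_sumr mulmx_suml; apply: eq_bigr => i _.
by rewrite -scalemxAl -scalemxAr JApow.
Qed.

Lemma JmSum (I : finType) (F : I -> 'cV[C]_(n + n)) :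
  Jm (\sum_i F i) = \sum_i Jm (F i).
Proof. exact: (big_morph Jm JmD Jm0). Qed.

Lemma BTJ alpha w : (Bmat n alpha)^T *m Jm w = Jm ((Bmat n alpha)^T *m w).
Proof.
rewrite BtrE !mulmx_suml JmSum; apply: eq_bigr => i _.
by rewrite -!scalemxAl ATJpow JmZ.
Qed.

Lemma BH alpha H : A *m H = H *m A^T ->
  Bmat n alpha *m H = H *m (Bmat n alpha)^T.
Proof.
move=> hA; rewrite BtrE /Bmat mulmx_sumr mulmx_suml; apply: eq_bigr => i _.
by rewrite -scalemxAl -scalemxAr HApow.
Qed.


Definition Rm (M : 'M[C]_(n + n)) (eps : C) x :=
  1%:M - eps ^+ 2 *: ((Jm x *m M) *m (Jm x *m M)).

Definition Q0 (M : 'M[C]_(n + n)) (eps : C) x w :=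
  eps ^+ 2 *: ((Jm x *m M) *m (Jm w *m M) + (Jm w *m M) *m (Jm x *m M)).

Definition lfun (M : 'M[C]_(n + n)) (eps : C) x w :=
  let S := invmx (Rm M eps x) in
  (x^T *m M *m S *m Q0 M eps x w *m S *m x + w^T *m M *m S *m x
     + x^T *m M *m S *m w) 0 0.

Lemma Rm_tr M eps x : M^T = M -> (Rm M eps x)^T = 1%:M - eps ^+ 2 *: ((M *m Jm x) *m (M *m Jm x)).
Proof.
move=> hM; rewrite /Rm linearD /= linearN /= linearZ /= trmx1 !trmx_mul hM Jm_tr.
by rewrite !mulmxN !mulNmx opprK.
Qed.

Lemma symS M eps x : M^T = M -> Rm M eps x \in unitmx ->
  forall p (X : 'M_(p, n + n)), X *m (invmx (Rm M eps x))^T *m M = X *m M *m invmx (Rm M eps x).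
Proof.
move=> hM hu p X; set R := Rm M eps x; set S := invmx R.
suff key : S^T *m M = M *m S by rewrite -!mulmxA key.
have hR : M *m R = R^T *m M.
  rewrite Rm_tr // /R /Rm mulmxBl mulmxBr mul1mx mulmx1 -scalemxAl -scalemxAr.
  by rewrite !mulmxA.
have e1 : S^T *m R^T = 1%:M by rewrite -trmx_mul mulmxV // trmx1.
rewrite -[S^T *m M]mulmx1 -(mulmxV hu) mulmxA -[S^T *m M *m R]mulmxA hR.
by rewrite !mulmxA e1 mul1mx.
Qed.


Lemma eD p q (X Y : 'M[C]_(p, q)) i j : (X + Y) i j = X i j + Y i j.
Proof. by rewrite mxE. Qed.
Lemma eZ p q a (X : 'M[C]_(p, q)) i j : (a *: X) i j = a * X i j.
Proof. by rewrite mxE. Qed.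
Lemma eN p q (X : 'M[C]_(p, q)) i j : (- X) i j = - X i j.
Proof. by rewrite mxE. Qed.
Lemma eT p q (X : 'M[C]_(p, q)) i j : X^T i j = X j i.
Proof. by rewrite mxE. Qed.

Lemma symform M eps x w : M^T = M -> Rm M eps x \in unitmx ->
  let S := invmx (Rm M eps x) in
  (x^T *m M *m S *m ((Jm x *m M) *m (Jm w *m M)) *m S *m x) 0 0 =
  (x^T *m M *m S *m ((Jm w *m M) *m (Jm x *m M)) *m S *m x) 0 0.
Proof.
move=> hM hu S.
rewrite -[LHS]eT; congr (_ 0 0).
rewrite !trmx_mul !trmxK !Jm_tr hM !mulmxN !mulNmx opprK !mulmxA.
rewrite !(symS hM hu).
by [].
Qed.

Lemma lfun_sym M eps x w : M^T = M -> Rm M eps x \in unitmx ->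
  let S := invmx (Rm M eps x) in
  lfun M eps x w = (eps ^+ 2 *+ 2) *
    (x^T *m M *m S *m ((Jm w *m M) *m (Jm x *m M)) *m S *m x) 0 0
    + (w^T *m M *m S *m x) 0 0 + (x^T *m M *m S *m w) 0 0.
Proof.
move=> hM hu S; rewrite /lfun /Q0 -/S.
rewrite -scalemxAr -!scalemxAl mulmxDr !mulmxDl !eD eZ eD.
rewrite (symform w hM hu) -/S.
by rewrite mulr2n mulrDl mulrDr.
Qed.


Lemma Q0_lin M eps x a u v :
  Q0 M eps x (a *: u + v) = a *: Q0 M eps x u + Q0 M eps x v.
Proof.
rewrite /Q0 JmD JmZ mulmxDl -scalemxAl mulmxDr mulmxDl -scalemxAr -scalemxAl.
by rewrite !scalerDr !scalerA mulrC addrACA.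
Qed.

Lemma trlin a (u v : 'cV[C]_(n + n)) : (a *: u + v)^T = a *: u^T + v^T.
Proof. by apply/matrixP => i j; rewrite !mxE. Qed.

Lemma lin_auxM p q (a e : C) (X1 X2 X3 Y1 Y2 Y3 : 'M[C]_(p, q)) :
  a *: (e *: X1) + e *: Y1 + (a *: X2 + Y2) + (a *: X3 + Y3) =
  a *: (e *: X1 + X2 + X3) + (e *: Y1 + Y2 + Y3).
Proof.
rewrite !scalerDr (addrACA (a *: (e *: X1)) (e *: Y1)).
by rewrite [LHS]addrACA.
Qed.

Lemma lfun_lin M eps x a u v :
  lfun M eps x (a *: u + v) = a * lfun M eps x u + lfun M eps x v.
Proof.
rewrite /lfun -eZ -eD; congr (_ 0 0).
rewrite Q0_lin trlin.
set S := invmx _.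
rewrite !mulmxDr !mulmxDl -!scalemxAr -!scalemxAl.
by rewrite lin_auxM.
Qed.


Section Rel.
Variables (H : 'M[C]_(n + n)) (alpha : nat -> C) (eps : C) (x : 'cV[C]_(n + n)).
Hypothesis hHs : H^T = H.
Hypothesis hA : A *m H = H *m A^T.
Hypothesis hB2 : Bmat n alpha *m Bmat n alpha = 1%:M.
Hypothesis hu : Rm H eps x \in unitmx.
Local Notation B := (Bmat n alpha).
Local Notation J := (Jm x).

Lemma L1 p (X : 'M[C]_(p, n + n)) : X *m B *m H = X *m H *m B^T.
Proof. by rewrite -!mulmxA BH. Qed.
Lemma L2 p y (X : 'M[C]_(p, n + n)) : X *m B^T *m Jm y = X *m Jm y *m B.
Proof. by rewrite -!mulmxA JB. Qed.
Lemma L5 p (X : 'M[C]_(p, n + n)) : X *m B^T *m B^T = X.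
Proof. by rewrite -mulmxA -trmx_mul hB2 trmx1 mulmx1. Qed.
Lemma L4 p w (X : 'M[C]_(p, n + n)) : X *m B^T *m Jm w = X *m Jm (B^T *m w).
Proof. by rewrite -!mulmxA BTJ. Qed.

Lemma RK : Rm (B *m H) eps x = Rm H eps x.
Proof.
rewrite /Rm; congr (_ - _ *: _).
by rewrite !mulmxA !L1 !L2 !L1 !L5.
Qed.

Lemma BRcomm : B^T *m Rm H eps x = Rm H eps x *m B^T.
Proof.
rewrite /Rm mulmxBl mulmxBr mul1mx mulmx1 -scalemxAl -scalemxAr; congr (_ - _ *: _).
by rewrite -[LHS]mul1mx !mulmxA L2 L1 L2 L1 mul1mx.
Qed.

Lemma L3 p (X : 'M[C]_(p, n + n)) :
  X *m B^T *m invmx (Rm H eps x) = X *m invmx (Rm H eps x) *m B^T.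
Proof.
set R := Rm H eps x; set S := invmx R.
suff key : B^T *m S = S *m B^T by rewrite -!mulmxA key.
rewrite -[B^T *m S]mul1mx -(mulVmx hu) -/S -mulmxA (mulmxA R) -BRcomm.
by rewrite -(mulmxA B^T) mulmxV // mulmx1.
Qed.

Lemma Ksym : (B *m H)^T = B *m H.
Proof. by rewrite trmx_mul hHs -BH. Qed.

Lemma lfunK w : lfun (B *m H) eps x w = lfun H eps x (B^T *m w).
Proof.
have huK : Rm (B *m H) eps x \in unitmx by rewrite RK.
rewrite (lfun_sym w Ksym huK) (lfun_sym _ hHs hu) RK.
rewrite trmx_mul trmxK !mulmxA !L1 -!L4 !L3.
by rewrite L2 L1 L3 L5.
Qed.

Definition gvec M := \col_(i < n + n) lfun M eps x (delta_mx i 0).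

Lemma lfun0 M : lfun M eps x 0 = 0.
Proof.
have := lfun_lin M eps x 1 0 0; rewrite scale1r addr0 mul1r => h.
by apply: (@addrI _ (lfun M eps x 0)); rewrite addr0 -h.
Qed.

Lemma lfun_sum M (F : 'I_(n + n) -> C) (G : 'I_(n + n) -> 'cV[C]_(n + n)) :
  lfun M eps x (\sum_j F j *: G j) = \sum_j F j * lfun M eps x (G j).
Proof.
elim/big_rec2: _ => [|j y1 y2 _ <-]; first exact: lfun0.
exact: lfun_lin.
Qed.

Lemma BTdelta i : B^T *m delta_mx i 0 = \sum_j B i j *: (delta_mx j 0 : 'cV[C]_(n + n)).
Proof.
rewrite {1}[B^T *m _]matrix_sum_delta; apply: eq_bigr => j _.
rewrite big_ord1; congr (_ *: _).
rewrite !mxE (bigD1 i) //= big1 ?addr0; first by rewrite !mxE !eqxx mulr1.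
by move=> k hk; rewrite !mxE (negbTE hk) mulr0.
Qed.

Lemma gvecK : gvec (B *m H) = B *m gvec H.
Proof.
apply/matrixP => i j; rewrite (ord1 j) !mxE lfunK BTdelta lfun_sum.
by apply: eq_bigr => k _; rewrite !mxE.
Qed.

Lemma bracketB (g : 'cV[C]_(n + n)) (Pm : 'M[C]_(n + n)) :
  Pm^T = - Pm -> Pm *m B = B^T *m Pm -> bracket g Pm (B *m g) = 0.
Proof.
move=> hT hPB; rewrite /bracket.
set s := (g^T *m Pm *m (B *m g)) 0 0.
have hs : s = - s.
  rewrite {1}/s -eT !trmx_mul trmxK hT ?mulNmx ?mulmxN eN !mulmxA.
  by rewrite -(mulmxA g^T B^T) -hPB /s !mulmxA.
have : s *+ 2 == 0 by rewrite mulr2n {1}hs addNr.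
by rewrite mulrn_eq0 /= => /eqP.
Qed.

Lemma PiT : (Pimat H eps x)^T = - Pimat H eps x.
Proof.
rewrite /Pimat linearD /= linearN /= linearZ /= !trmx_mul hHs Jm_tr.
by rewrite !(mulmxN, mulNmx, opprK) !mulmxA scalerN opprD opprK.
Qed.

Lemma PiB : Pimat H eps x *m B = B^T *m Pimat H eps x.
Proof.
rewrite /Pimat mulmxBl mulmxBr -scalemxAl -scalemxAr JB; congr (_ - _ *: _).
by rewrite -[RHS]mul1mx !mulmxA L2 L1 L2 L1 L2 mul1mx.
Qed.

End Rel.
End Alg.

Section Norm.
Variable C : numClosedFieldType.

Definition mn p q (X : 'M[C]_(p, q)) : C := \sum_i \sum_j `|X i j|.

Lemma mn_ge0 p q (X : 'M[C]_(p, q)) : 0 <= mn X.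
Proof. by apply: sumr_ge0 => i _; apply: sumr_ge0 => j _. Qed.

Lemma mn_entry p q (X : 'M[C]_(p, q)) i j : `|X i j| <= mn X.
Proof.
rewrite /mn (bigD1 i) //= (bigD1 j) //= -addrA lerDl.
apply: addr_ge0; first by apply: sumr_ge0.
by apply: sumr_ge0 => k _; apply: sumr_ge0.
Qed.

Lemma mnD p q (X Y : 'M[C]_(p, q)) : mn (X + Y) <= mn X + mn Y.
Proof.
rewrite /mn -big_split /=; apply: ler_sum => i _.
rewrite -big_split /=; apply: ler_sum => j _; rewrite mxE; exact: ler_normD.
Qed.

Lemma mnZ p q a (X : 'M[C]_(p, q)) : mn (a *: X) = `|a| * mn X.
Proof.
rewrite /mn mulr_sumr; apply: eq_bigr => i _; rewrite mulr_sumr.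
by apply: eq_bigr => j _; rewrite mxE normrM.
Qed.

Lemma mnN p q (X : 'M[C]_(p, q)) : mn (- X) = mn X.
Proof. by rewrite -scaleN1r mnZ normrN normr1 mul1r. Qed.

Lemma mnM p q r (X : 'M[C]_(p, q)) (Y : 'M[C]_(q, r)) : mn (X *m Y) <= mn X * mn Y.
Proof.
rewrite /mn mulr_suml; apply: ler_sum => i _.
apply: (@le_trans _ _ (\sum_j \sum_k `|X i k| * `|Y k j|)).
  apply: ler_sum => j _; rewrite mxE.
  by apply: le_trans (ler_norm_sum _ _ _) _; apply: ler_sum => k _; rewrite normrM.
rewrite exchange_big /= mulr_suml; apply: ler_sum => k _.
rewrite -mulr_sumr; apply: ler_wpM2l; first exact: normr_ge0.
rewrite (bigD1 k) //= lerDl; apply: sumr_ge0 => m _.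
by apply: sumr_ge0 => j _.
Qed.

Lemma mn_gt0 p q (X : 'M[C]_(p, q)) : X != 0 -> 0 < mn X.
Proof.
move=> hX; case: (boolP [exists i, exists j, X i j != 0]).
  case/existsP => i /existsP [j hij].
  by apply: lt_le_trans (mn_entry X i j); rewrite normr_gt0.
move=> hn; case/eqP: hX; apply/matrixP => i j; rewrite mxE.
apply/eqP; apply: contraNT hn => hij.
by apply/existsP; exists i; apply/existsP; exists j.
Qed.

Lemma unit_small m (N : 'M[C]_m) : mn N < 1 -> 1%:M - N \in unitmx.
Proof.
move=> hN; rewrite unitmxE unitfE; apply/negP => /det0P [v hv0 hv].
have e : v = v *m N by apply/eqP; rewrite -subr_eq0 -{1}(mulmx1 v) -mulmxBr hv.
have hp := mn_gt0 hv0.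
have : mn v <= mn v * mn N by rewrite {1}e; exact: mnM.
rewrite -{1}(mulr1 (mn v)) ler_pM2l // => h.
by have := le_lt_trans h hN; rewrite ltxx.
Qed.

Lemma half_lt (d : C) : 0 < d -> d / 2 < d.
Proof. by move=> hd; rewrite ltr_pdivrMr // mulr_natr mulr2n ltrDr. Qed.

Lemma pick_small (d1 d2 : C) : 0 < d1 -> 0 < d2 ->
  exists2 d, 0 < d & d <= d1 /\ d <= d2.
Proof.
move=> h1 h2; case/orP: (real_leVge (gtr0_real h1) (gtr0_real h2)) => h.
  by exists d1.
by exists d2.
Qed.

Lemma partial_unique n (F : 'cV[C]_(n + n) -> C) x i l1 l2 :
  is_partial F x i l1 -> is_partial F x i l2 -> l1 = l2.
Proof.
move=> p1 p2; apply/eqP; apply: contraT => hne.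
have he : 0 < `|l1 - l2| / 2 by rewrite divr_gt0 // normr_gt0 subr_eq0.
have [d1 hd1 k1] := p1 _ he; have [d2 hd2 k2] := p2 _ he.
have [d hd [hd1' hd2']] := pick_small hd1 hd2.
have hh : 0 < d / 2 by rewrite divr_gt0.
have hr : d / 2 \is Num.real by exact: gtr0_real.
have hn : d / 2 != 0 by rewrite gt_eqF.
have hlt : `|d / 2| < d by rewrite gtr0_norm // half_lt.
set q := (F (x + d / 2 *: delta_mx i 0) - F x) / (d / 2).
have a1 := k1 _ hr hn (lt_le_trans hlt hd1').
have a2 := k2 _ hr hn (lt_le_trans hlt hd2').
have : `|l1 - l2| < `|l1 - l2| / 2 + `|l1 - l2| / 2.
  apply: le_lt_trans (ltrD a1 a2).
  by rewrite -/q -(normrN (q - l1)) (le_trans _ (ler_normD _ _)) // opprB addrA subrK.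
by rewrite -splitr ltxx.
Qed.

End Norm.

Section An.
Variables (C : numClosedFieldType) (n : nat).
Local Notation Jm := (@Jmat C n).

Lemma K1gen m (P Q R' T : 'M[C]_m) e h :
  1%:M - e *: (P + h *: Q + (h *: R' + h *: (h *: T))) =
  1%:M - e *: P - h *: (e *: (Q + R') + h *: (e *: T)).
Proof. by apply/matrixP => a b; rewrite !mxE; ring. Qed.

Lemma K1 (M : 'M[C]_(n + n)) eps x w h :
  Rm M eps (x + h *: w) = Rm M eps x - h *: (Q0 M eps x w + h *: (eps ^+ 2 *: ((Jm w *m M) *m (Jm w *m M)))).
Proof.
rewrite /Rm /Q0 JmD JmZ mulmxDl -scalemxAl mulmxDl !mulmxDr -!scalemxAl -!scalemxAr.
by rewrite K1gen scalerDr.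
Qed.

Lemma trlin2 m (h : C) (u v : 'cV[C]_m) : (u + h *: v)^T = u^T + h *: v^T.
Proof. by apply/matrixP => i j; rewrite !mxE. Qed.

Lemma ALG m (M S Sh Q0 Q2 : 'M[C]_m) (x w : 'cV[C]_m) (h : C) :
  Sh = S + h *: (Sh *m (Q0 + h *: Q2) *m S) ->
  (x + h *: w)^T *m M *m Sh *m (x + h *: w) =
  x^T *m M *m S *m x
  + h *: (x^T *m M *m S *m Q0 *m S *m x + w^T *m M *m S *m x + x^T *m M *m S *m w)
  + (h * h) *: (x^T *m M *m (Sh *m Q2 + (Sh *m (Q0 + h *: Q2) *m S) *m Q0) *m S *m x
  + w^T *m M *m (Sh *m (Q0 + h *: Q2) *m S) *m x + x^T *m M *m (Sh *m (Q0 + h *: Q2) *m S) *m w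
  + w^T *m M *m Sh *m w).
Proof.
move=> e.
set Z := Sh *m (Q0 + h *: Q2) *m S in e *.
have eZ : Z = (S + h *: Z) *m (Q0 + h *: Q2) *m S by rewrite {1}/Z {1}e.
clearbody Z; subst Sh.
have hX : x^T *m M *m Z *m x = x^T *m M *m ((S + h *: Z) *m (Q0 + h *: Q2) *m S) *m x.
  by rewrite -eZ.
rewrite !(mulmxDl, mulmxDr) in hX.
repeat (rewrite -scalemxAl in hX || rewrite -scalemxAr in hX || rewrite mulmxA in hX).
rewrite trlin2 !(mulmxDl, mulmxDr).
repeat (rewrite -scalemxAl || rewrite -scalemxAr || rewrite mulmxA).
rewrite hX.
move: (x^T *m M *m S *m x) (w^T *m M *m S *m x) (x^T *m M *m S *m Q0 *m S *m x)
  (x^T *m M *m S *m Q2 *m S *m x) (x^T *m M *m Z *m Q0 *m S *m x)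
  (x^T *m M *m Z *m Q2 *m S *m x) (w^T *m M *m Z *m x) (x^T *m M *m S *m w)
  (w^T *m M *m S *m w) (x^T *m M *m Z *m w) (w^T *m M *m Z *m w).
move=> a1 a2 a3 a4 a5 a6 a7 a8 a9 a10 a11.
by apply/matrixP => i j; rewrite !mxE; ring.
Qed.

Lemma bndM p r s (X : 'M[C]_(p, r)) (Y : 'M[C]_(r, s)) a b :
  mn X <= a -> mn Y <= b -> mn (X *m Y) <= a * b.
Proof. by move=> h1 h2; apply: le_trans (mnM _ _) (ler_pM (mn_ge0 _) (mn_ge0 _) h1 h2). Qed.
Lemma bndD p r (X Y : 'M[C]_(p, r)) a b :
  mn X <= a -> mn Y <= b -> mn (X + Y) <= a + b.
Proof. by move=> h1 h2; apply: le_trans (mnD _ _) (lerD h1 h2). Qed.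
Lemma bndR p r (X : 'M[C]_(p, r)) : mn X <= mn X.
Proof. exact: lexx. Qed.

Lemma genbnd m (x w : 'cV[C]_m) (M S Q0 Q2 Sh Qh : 'M[C]_m) sb qb :
  mn Sh <= sb -> mn Qh <= qb ->
  mn (x^T *m M *m (Sh *m Q2 + (Sh *m Qh *m S) *m Q0) *m S *m x
  + w^T *m M *m (Sh *m Qh *m S) *m x + x^T *m M *m (Sh *m Qh *m S) *m w
  + w^T *m M *m Sh *m w) <=
  mn x^T * mn M * (sb * mn Q2 + sb * qb * mn S * mn Q0) * mn S * mn x
  + mn w^T * mn M * (sb * qb * mn S) * mn x + mn x^T * mn M * (sb * qb * mn S) * mn w
  + mn w^T * mn M * sb * mn w.
Proof.
move=> b1 b2.
repeat first [exact: b1 | exact: b2 | apply: bndD | apply: bndM | exact: bndR].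
Qed.

Section Fix.
Variables (M : 'M[C]_(n + n)) (eps : C) (x w : 'cV[C]_(n + n)).
Hypothesis hu : Rm M eps x \in unitmx.
Let R := Rm M eps x.
Let S := invmx R.
Let Q0m := Q0 M eps x w.
Let Q2 := eps ^+ 2 *: ((Jm w *m M) *m (Jm w *m M)).
Let Qh (h : C) := Q0m + h *: Q2.
Let Sh (h : C) := invmx (Rm M eps (x + h *: w)).
Let q := mn Q0m + mn Q2.
Let d0 := (2 * (mn S * q + 1))^-1.

Lemma q_ge0 : 0 <= q.
Proof. by rewrite addr_ge0 // mn_ge0. Qed.

Lemma bndQ (h : C) : `|h| <= 1 -> mn (Qh h) <= q.
Proof.
move=> h1; apply: le_trans (mnD _ _) _; rewrite lerD2l mnZ.
by rewrite -[X in _ <= X]mul1r ler_wpM2r // mn_ge0.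
Qed.

Lemma d0_gt0 : 0 < d0.
Proof.
rewrite invr_gt0 mulr_gt0 // ltr_pwDr // mulr_ge0 // ?mn_ge0 //; exact: q_ge0.
Qed.

Lemma small (h : C) : `|h| < d0 -> `|h| * (mn S * q + 1) < 2^-1 /\ `|h| <= 1.
Proof.
move=> hh.
have hp : 0 < mn S * q + 1 by rewrite ltr_pwDr // mulr_ge0 // ?mn_ge0 //; exact: q_ge0.
have a : `|h| * (mn S * q + 1) < 2^-1.
  apply: lt_le_trans (_ : d0 * (mn S * q + 1) <= 2^-1).
    by rewrite ltr_pM2r.
  by rewrite /d0 invfM -mulrA mulVf ?mulr1 // gt_eqF.
split => //; apply: le_trans (_ : 2^-1 <= 1); last first.
  by rewrite invf_le1 // ler1n.
apply: ltW; apply: le_lt_trans a.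
by rewrite -[X in X <= _]mulr1 ler_wpM2l // lerDr mulr_ge0 // ?mn_ge0 //; exact: q_ge0.
Qed.

Lemma RS : R *m S = 1%:M.
Proof. exact: (mulmxV hu). Qed.
Lemma SR : S *m R = 1%:M.
Proof. exact: (mulVmx hu). Qed.

Lemma resolv (h : C) : Rm M eps (x + h *: w) \in unitmx ->
  Sh h = S + h *: (Sh h *m Qh h *m S).
Proof.
move=> hv.
have ShR : Sh h *m Rm M eps (x + h *: w) = 1%:M := mulVmx hv.
have e : Sh h *m (R - Rm M eps (x + h *: w)) *m S = Sh h - S.
  by rewrite mulmxBr mulmxBl -(mulmxA (Sh h)) RS mulmx1 ShR mul1mx.
rewrite K1 -/R -/Q0m -/Q2 opprB addrC subrK in e.
rewrite -scalemxAr -scalemxAl in e.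
by rewrite e addrC subrK.
Qed.

Lemma unit_h (h : C) : `|h| < d0 -> Rm M eps (x + h *: w) \in unitmx /\ mn (Sh h) <= 2 * mn S.
Proof.
move=> hh; have [a b] := small hh.
have hQ := bndQ b.
have hN : mn (h *: (S *m Qh h)) <= 2^-1.
  rewrite mnZ; apply: ltW; apply: le_lt_trans a; rewrite ler_wpM2l //.
  apply: le_trans (mnM _ _) _; apply: le_trans (_ : mn S * q <= _); last by rewrite lerDl.
  by rewrite ler_wpM2l // mn_ge0.
have hRh : Rm M eps (x + h *: w) = R *m (1%:M - h *: (S *m Qh h)).
  by rewrite K1 mulmxBr mulmx1 -scalemxAr (mulmxA R) RS mul1mx.
have hv : Rm M eps (x + h *: w) \in unitmx.
  rewrite hRh unitmx_mul hu /=; apply: unit_small; apply: le_lt_trans hN _.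
  by rewrite invf_lt1 // ltr1n.
split => //.
have e := resolv hv.
have h1 : mn (Sh h) <= mn S + `|h| * (mn (Sh h) * (q * mn S)).
  rewrite {1}e; apply: le_trans (mnD _ _) _; rewrite lerD2l mnZ ler_wpM2l //.
  apply: le_trans (mnM _ _) _; rewrite mulrA ler_wpM2r ?mn_ge0 //.
  by apply: le_trans (mnM _ _) _; rewrite ler_wpM2l ?mn_ge0.
have h2 : `|h| * (mn (Sh h) * (q * mn S)) <= mn (Sh h) / 2.
  rewrite mulrCA ler_wpM2l ?mn_ge0 //; apply: ltW; apply: le_lt_trans a.
  by rewrite ler_wpM2l // mulrC lerDl.
have h3 : mn (Sh h) <= mn S + mn (Sh h) / 2.
  by apply: le_trans h1 _; rewrite lerD2l.
rewrite -lerBlDr in h3.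
have e2 : mn (Sh h) - mn (Sh h) / 2 = mn (Sh h) / 2.
  by rewrite {1}(splitr (mn (Sh h))) addrK.
by rewrite e2 ler_pdivrMr // mulrC in h3.
Qed.

Let Lm := x^T *m M *m S *m Q0m *m S *m x + w^T *m M *m S *m x + x^T *m M *m S *m w.
Let Em (h : C) := x^T *m M *m (Sh h *m Q2 + (Sh h *m Qh h *m S) *m Q0m) *m S *m x
  + w^T *m M *m (Sh h *m Qh h *m S) *m x + x^T *m M *m (Sh h *m Qh h *m S) *m w
  + w^T *m M *m Sh h *m w.

Lemma errmat (h : C) : Rm M eps (x + h *: w) \in unitmx ->
  (x + h *: w)^T *m M *m Sh h *m (x + h *: w) =
  x^T *m M *m S *m x + h *: Lm + (h * h) *: Em h.
Proof. move=> hv; exact: (@ALG (n + n) M S (Sh h) Q0m Q2 x w h (resolv hv)). Qed.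

Lemma bndE : exists Kc, forall h, `|h| < d0 -> mn (Em h) <= Kc.
Proof.
eexists => h hh; have [_ b1] := unit_h hh; have b2 := bndQ (small hh).2.
exact: (genbnd x w M S Q0m Q2 b1 b2).
Qed.

Lemma e3 (A L E : 'M[C]_1) (h k : C) :
  (A + h *: L + k *: E) 0 0 = A 0 0 + h * L 0 0 + k * E 0 0.
Proof. by rewrite !mxE. Qed.

Lemma fld (A L E h : C) : h != 0 -> (A + h * L + h * h * E - A) / h - L = h * E.
Proof. by move=> hn; field. Qed.

Lemma partial_w : forall e : C, 0 < e -> exists2 d : C, 0 < d &
  forall h : C, h \is Num.real -> h != 0 -> `|h| < d ->
    `|(Htilde M eps (x + h *: w) - Htilde M eps x) / h - lfun M eps x w| < e.
Proof.
move=> e he; have [Kc hK] := bndE.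
have hK0 : 0 <= Kc.
  by apply: le_trans (mn_ge0 _) (hK 0 _); rewrite normr0 d0_gt0.
have hKp : 0 < Kc + 1 by rewrite ltr_pwDr.
have hd1 : 0 < e / (Kc + 1) by rewrite divr_gt0.
have [d hd [hd0 hd1']] := pick_small d0_gt0 hd1.
exists d => // h _ hn hlt.
have hh0 : `|h| < d0 := lt_le_trans hlt hd0.
have [hv _] := unit_h hh0.
have E := errmat hv.
have hF : Htilde M eps (x + h *: w) = ((x + h *: w)^T *m M *m Sh h *m (x + h *: w)) 0 0.
  by [].
rewrite hF E e3.
change (Htilde M eps x) with ((x^T *m M *m S *m x) 0 0).
change (lfun M eps x w) with (Lm 0 0).
have bE : `|Em h 0 0| <= Kc := le_trans (mn_entry _ _ _) (hK h hh0).
rewrite (fld _ _ _ hn).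
rewrite normrM; apply: le_lt_trans (_ : `|h| * (Kc + 1) < e); last first.
  have := lt_le_trans hlt hd1'; rewrite ltr_pdivlMr //.
rewrite ler_wpM2l //; apply: le_trans bE _; rewrite lerDl //.
Qed.

End Fix.
End An.

Unset Implicit Arguments.

Lemma grad_ok (C : numClosedFieldType) (n : nat) (M : 'M[C]_(n + n)) eps x :
  Rm M eps x \in unitmx -> is_gradient (Htilde M eps) x (gvec eps x M).
Proof.
move=> hu i; rewrite mxE; move=> e he.
exact: (partial_w (delta_mx i 0) hu he).
Qed.

Lemma grad_uniq (C : numClosedFieldType) (n : nat) (F : 'cV[C]_(n + n) -> C) x g1 g2 :
  is_gradient F x g1 -> is_gradient F x g2 -> g1 = g2.
Proof.
move=> h1 h2; apply/matrixP => i j; rewrite (ord1 j).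
exact: partial_unique (h1 i) (h2 i).
Qed.

Theorem mainTheorem5 (C : numClosedFieldType) (n : nat) (hn : (2 <= n)%N)
    (H : 'M[C]_(n + n)) (alpha : nat -> C) (eps : C) (x : 'cV[C]_(n + n)) :
  (forall i j, H i j \is Num.real) ->
  H^T = H ->
  Amat C n *m H = H *m (Amat C n)^T ->
  Bmat n alpha *m Bmat n alpha = 1%:M ->
  eps \is Num.real ->
  (forall i, x i 0 \is Num.real) ->
  resolvent_ok H eps x ->
  resolvent_ok (Bmat n alpha *m H) eps x ->
  let Ht := Htilde H eps in
  let Kt := Htilde (Bmat n alpha *m H) eps in
  (exists gH gK, is_gradient Ht x gH /\ is_gradient Kt x gK) /\
  (forall gH gK, is_gradient Ht x gH -> is_gradient Kt x gK ->
     bracket gH (Jmat x) gK = 0 /\ bracket gH (Pimat H eps x) gK = 0).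
Proof.
move=> _ hHs hA hB2 _ _ hu hu' Ht Kt.
have gH := @grad_ok C n H eps x hu.
have gK := @grad_ok C n _ eps x hu'.
split; first by exists (gvec eps x H), (gvec eps x (Bmat n alpha *m H)).
move=> g1 g2; rewrite /Ht /Kt => h1 h2.
rewrite -(grad_uniq _ _ _ _ _ _ gH h1) -(grad_uniq _ _ _ _ _ _ gK h2) (gvecK hHs hA hB2 hu).
split; apply: bracketB.
- exact: Jm_tr.
- exact: JB.
- exact: PiT.
- exact: PiB.
Qed.
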